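(* Let $N=(G=(V,E),\sigma,u,s)$ be a skew-symmetric network and $f$ an IS-flow in $N$. Then $f$ has maximum value among all IS-flows in $N$ if and only if there is no r-augmenting path for $f$.
   Context: A skew-symmetric graph is a finite directed graph $G=(V,E)$ (parallel arcs allowed) with a map $\sigma$ of $V\cup E$ onto itself such that $\sigma(x)\ne x$, $\sigma(\sigma(x))=x$ for all $x$, $\sigma(V)=V$, and for each arc $a$ from $v$ to $w$, $\sigma(a)$ is an arc from $\sigma(w)$ to $\sigma(v)$; write $a'=\sigma(a)$. A function $h$ on $E$ is symmetric if $h(a)=h(\sigma(a))$. A skew-symmetric network is $N=(G,\sigma,u,s)$ with $u:E\to\mathbb Z_{\ge0}$ symmetric and source $s$; $s'=\sigma(s)$ is the sink. A flow is $f:E\to\mathbb R_{\ge0}$ with $f\le u$ and conservation ($\sum_{\text{out}}f-\sum_{\text{in}}f=0$) at every node other than $s,s'$; its value is $|f|=\sum_{\text{out of }s}f-\sum_{\text{into }s}f$. An IS-flow is an integer-valued symmetric flow. $G^+=(V,E^+)$ is obtained from $G$ by adding, for each arc $a=(x,y)\in E$, a reverse arc $a^R=(y,x)$; $\sigma$ extends by $\sigma(a^R)=(\sigma(a))^R$. The residual capacity is $u_f(a)=u(a)-f(a)$ for $a\in E$ and $u_f(a^R)=f(a)$. For a nonnegative integer symmetric function $h$ on the arcs of a skew-symmetric graph, a directed path $P$ is $h$-regular if $h(a)>0$ for every arc $a$ of $P$ and every arc $a$ of $P$ whose mate $a'$ also lies on $P$ satisfies $h(a)\ge2$. An r-augmenting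 path for $f$ is a $u_f$-regular path from $s$ to $s'$ in $G^+$. *)

(* Defs.v *)
From mathcomp Require Import all_boot all_order all_algebra.
Set Implicit Arguments. Unset Strict Implicit. Unset Printing Implicit Defensive.
Import Order.TTheory GRing.Theory Num.Theory.

Record skewGraph := SkewGraph {
  sg_V : finType;
  sg_E : finType;
  tail : sg_E -> sg_V;
  head : sg_E -> sg_V;
  sigV : sg_V -> sg_V;
  sigE : sg_E -> sg_E;
  sigV_invol : involutive sigV;
  sigE_invol : involutive sigE;
  sigV_nofix : forall v, sigV v != v;
  sigE_nofix : forall a, sigE a != a;
  tail_sigE : forall a, tail (sigE a) = sigV (head a);
  head_sigE : forall a, head (sigE a) = sigV (tail a)
}.

Section Defs.
Variable G : skewGraph.
Local Notation V := (sg_V G).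
Local Notation E := (sg_E G).

Definition sym_fun (h : E -> nat) := forall a, h (sigE a) = h a.

Definition outflow (f : E -> nat) (v : V) : int :=
  (\sum_(a | tail a == v) (f a)%:Z - \sum_(a | head a == v) (f a)%:Z)%R.

(* f is a flow in the network (G, sigma, u, s) (source s, sink sigV s);
   nonnegativity is automatic since values are in nat *)
Definition is_int_flow (u : E -> nat) (s : V) (f : E -> nat) :=
  (forall a, f a <= u a) /\
  (forall v, v != s -> v != sigV s -> outflow f v = 0%R).

Definition is_ISflow (u : E -> nat) (s : V) (f : E -> nat) :=
  is_int_flow u s f /\ sym_fun f.

Definition flow_value (s : V) (f : E -> nat) : int := outflow f s.

(* The graph G^+ : arcs are inl a (= a) and inr a (= a^R, reversed a). *)
Definition Eplus := (E + E)%type.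
Definition tailp (b : Eplus) : V :=
  match b with inl a => tail a | inr a => head a end.
Definition headp (b : Eplus) : V :=
  match b with inl a => head a | inr a => tail a end.
Definition sigP (b : Eplus) : Eplus :=
  match b with inl a => inl (sigE a) | inr a => inr (sigE a) end.

Definition resid (u f : E -> nat) (b : Eplus) : nat :=
  match b with inl a => u a - f a | inr a => f a end.

Fixpoint pwalk (x y : V) (p : seq Eplus) : bool :=
  match p with
  | [::] => x == y
  | b :: q => (tailp b == x) && pwalk (headp b) y q
  end.

Definition is_dpath (x y : V) (p : seq Eplus) : bool :=
  pwalk x y p && uniq (x :: map headp p).

Definition regular (h : Eplus -> nat) (p : seq Eplus) : bool :=
  all (fun b => 0 < h b) p &&
  all (fun b => (sigP b \in p) ==> (1 < h b)) p.

Definition r_augmenting (u : E -> nat) (s : V) (f : E -> nat) (p : seq Eplus) :=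
  is_dpath s (sigV s) p && regular (resid u f) p.

End Defs.

(* Main.v *)
Require Import Defs.
From mathcomp Require Import all_boot all_order all_algebra zify ring lra.
Set Implicit Arguments. Unset Strict Implicit. Unset Printing Implicit Defensive.
Import Order.TTheory GRing.Theory Num.Theory.

Local Open Scope ring_scope.

Definition excP (G : skewGraph) (k : Eplus G -> int) (v : sg_V G) : int :=
  \sum_(b | tailp b == v) k b - \sum_(b | headp b == v) k b.

Definition outZ (G : skewGraph) (k : sg_E G -> int) (v : sg_V G) : int :=
  \sum_(a | tail a == v) k a - \sum_(a | Defs.head a == v) k a.

Lemma excP_add (G : skewGraph) (k1 k2 : Eplus G -> int) v :
  excP (fun b => k1 b + k2 b) v = excP k1 v + excP k2 v.
Proof. rewrite /excP !big_split /=; ring. Qed.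

Lemma excP_ext (G : skewGraph) (k1 k2 : Eplus G -> int) v :
  (forall b, k1 b = k2 b) -> excP k1 v = excP k2 v.
Proof. by move=> H; rewrite /excP; congr (_ - _); apply: eq_bigr. Qed.

Lemma sum_delta (T : finType) (P : pred T) (b : T) :
  \sum_(c | P c) ((c == b) : nat)%:Z = (P b : nat)%:Z.
Proof.
case Pb: (P b).
  rewrite (bigD1 b) //= eqxx big1 ?addr0 // => c /andP[_ /negbTE ->] //.
rewrite big1 // => c Pc; case: eqP => // E; by rewrite -E Pc in Pb.
Qed.

Lemma excP_delta (G : skewGraph) (b : Eplus G) v :
  excP (fun c => ((c == b) : nat)%:Z) v = ((tailp b == v) : nat)%:Z - ((headp b == v) : nat)%:Z.
Proof. by rewrite /excP !sum_delta. Qed.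

Lemma excP_split (G : skewGraph) (k : Eplus G -> int) v :
  excP k v = outZ (fun a => k (inl a) - k (inr a)) v.
Proof.
rewrite /excP /outZ !big_sumType /= !sumrB; ring.
Qed.

Lemma outZ_sub (G : skewGraph) (k1 k2 : sg_E G -> int) v :
  outZ k1 v - outZ k2 v = outZ (fun a => k1 a - k2 a) v.
Proof. rewrite /outZ !sumrB; ring. Qed.

Lemma sigP_invol (G : skewGraph) : involutive (@sigP G).
Proof. by case=> a /=; rewrite sigE_invol. Qed.

Lemma sigP_neq (G : skewGraph) (b : Eplus G) : sigP b != b.
Proof. by case: b => a /=; apply/negP => /eqP [] /eqP; apply/negP/sigE_nofix. Qed.

Lemma tailp_sig (G : skewGraph) (b : Eplus G) : tailp (sigP b) = sigV (headp b).
Proof. by case: b => a /=; rewrite ?tail_sigE ?head_sigE. Qed.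
Lemma headp_sig (G : skewGraph) (b : Eplus G) : headp (sigP b) = sigV (tailp b).
Proof. by case: b => a /=; rewrite ?tail_sigE ?head_sigE. Qed.

Lemma sigV_eq (G : skewGraph) (x y : sg_V G) : (sigV x == y) = (x == sigV y).
Proof.
apply/eqP/eqP => [<-|->]; by rewrite sigV_invol.
Qed.

Lemma excP_sig (G : skewGraph) (k : Eplus G -> int) v :
  excP (fun b => k (sigP b)) v = - excP k (sigV v).
Proof.
rewrite /excP (reindex_inj (inv_inj (@sigP_invol G))) /=.
rewrite [X in _ - X](reindex_inj (inv_inj (@sigP_invol G))) /=.
under eq_bigl do rewrite tailp_sig sigV_eq.
under [X in _ - X]eq_bigl do rewrite headp_sig sigV_eq.
under eq_bigr do rewrite sigP_invol.
under [X in _ - X]eq_bigr do rewrite sigP_invol.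
ring.
Qed.

Lemma excP_walk (G : skewGraph) (p : seq (Eplus G)) x y v :
  pwalk x y p ->
  excP (fun b => (count_mem b p)%:Z) v = ((x == v) : nat)%:Z - ((y == v) : nat)%:Z.
Proof.
elim: p x => [|b q IH] x /=.
  move=> /eqP ->; rewrite /excP !big1 //; ring.
move=> /andP[/eqP <- Hq].
rewrite (excP_ext (k2 := fun c => ((c == b) : nat)%:Z + (count_mem c q)%:Z)).
  rewrite excP_add excP_delta (IH _ Hq); ring.
by move=> c /=; rewrite PoszD eq_sym.
Qed.

Lemma pwalk_rcons (G : skewGraph) (p : seq (Eplus G)) x v b :
  pwalk x v p -> tailp b == v -> pwalk x (headp b) (rcons p b).
Proof.
elim: p x => [|c q IH] x /=.
  by move=> /eqP -> ->; rewrite eqxx.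
by move=> /andP[-> Hq] Hb; rewrite IH.
Qed.

Lemma pwalk_drop (G : skewGraph) (l : seq (Eplus G)) x y i d :
  pwalk x y l -> (i < size l)%N -> pwalk (headp (nth d l i)) y (drop i.+1 l).
Proof.
elim: l x i => [|b q IH] x i //=.
move=> /andP[_ Hq]; case: i => [|i] /= Hi; first by rewrite drop0.
exact: (IH _ _ Hq Hi).
Qed.

Lemma shorten (G : skewGraph) (p : seq (Eplus G)) x y :
  pwalk x y p -> exists q, is_dpath x y q /\ {subset q <= p}.
Proof.
elim: p x => [|b q IH] x /=.
  move=> /eqP ->; exists [::]; split => //; by rewrite /is_dpath /= eqxx.
move=> /andP[/eqP Hb Hq].
have [q' [/andP[Hw Hu] Hs]] := IH _ Hq.
set l := b :: q'.
have Hl : pwalk x y l by rewrite /= Hb eqxx Hw.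
have Hsl : {subset l <= b :: q}.
  move=> c; rewrite !inE => /orP[->//|/Hs ->]; by rewrite orbT.
have HL : uniq (map (@headp G) l) by [].
case Hx: (x \in map (@headp G) l); last first.
  exists l; split => //; by rewrite /is_dpath Hl /= -/l /= Hx.
set i := index x (map (@headp G) l).
have Hi : (i < size l)%N by rewrite -(size_map (@headp G)) index_mem.
have Hnth : headp (nth b l i) = x.
  by rewrite -(nth_map b x) // nth_index.
exists (drop i.+1 l); split; last first.
  by move=> c /mem_drop /Hsl.
have Hw2 := pwalk_drop b Hl Hi; rewrite Hnth in Hw2; rewrite /is_dpath Hw2 andTb.
rewrite cons_uniq map_drop drop_uniq // andbT.
move: HL; rewrite -{1}(cat_take_drop i.+1 (map (@headp G) l)) cat_uniq => /and3P[_ Hd _].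
apply/negP => Hxd; move/hasP: Hd; apply; exists x; first exact: Hxd.
by rewrite (take_nth x) ?size_map // mem_rcons inE (nth_map b) // Hnth eqxx.
Qed.

Lemma count_rcons1 (T : eqType) (W : seq T) b c :
  count_mem c (rcons W b) = (count_mem c W + (b == c))%N.
Proof. by rewrite -cats1 count_cat /= addn0. Qed.

Lemma step_exists (G : skewGraph) (s : sg_V G) (h r : Eplus G -> nat) v
  (h0 : forall v, v != s -> v != sigV s -> excP (fun b => (h b)%:Z) v = 0)
  (hpos : 0 < excP (fun b => (h b)%:Z) s)
  (He : excP (fun b => (r b)%:Z) v = excP (fun b => (h b)%:Z) v + ((v == v) : nat)%:Z
        - ((s == v) : nat)%:Z + ((sigV s == v) : nat)%:Z - ((sigV v == v) : nat)%:Z)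
  (Hv : v != sigV s) :
  exists b, tailp b == v /\ (0 < r b)%N.
Proof.
have Hpos : 0 < excP (fun b => (r b)%:Z) v.
  rewrite He eqxx.
  have -> : (sigV v == v) = false by apply/negbTE/sigV_nofix.
  have -> : (sigV s == v) = false by rewrite eq_sym (negbTE Hv).
  case Hsv: (s == v).
    by move/eqP: Hsv => Hsv; subst v; move: hpos; lia.
  rewrite h0; first by lia.
    by rewrite eq_sym Hsv.
  by [].
case Ex: [exists b, (tailp b == v) && (0 < r b)%N].
  by move/existsP: Ex => [b /andP[H1 H2]]; exists b.
exfalso; move: Hpos; rewrite /excP big1; last first.
  move=> b Hb; move/negbT: Ex; rewrite negb_exists => /forallP /(_ b).
  by rewrite Hb /= -leqNgt leqn0 => /eqP ->.
have : 0 <= \sum_(b | headp b == v) (r b)%:Z by apply: sumr_ge0.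
lia.
Qed.

Lemma greedy (G : skewGraph) (s : sg_V G) (h : Eplus G -> nat)
  (hs : forall b, h (sigP b) = h b)
  (h0 : forall v, v != s -> v != sigV s -> excP (fun b => (h b)%:Z) v = 0)
  (hpos : 0 < excP (fun b => (h b)%:Z) s) :
  exists p, pwalk s (sigV s) p /\
    forall b, (count_mem b p + count_mem (sigP b) p <= h b)%N.
Proof.
set hZ := fun b => (h b)%:Z.
suff gen : forall n (r : Eplus G -> nat) W v, (\sum_b r b <= n)%N ->
   (forall b, r (sigP b) = r b) -> pwalk s v W ->
   (forall b, count_mem b W + count_mem (sigP b) W + r b = h b)%N ->
   (forall w, excP (fun b => (r b)%:Z) w = excP hZ w + ((v == w) : nat)%:Z
        - ((s == w) : nat)%:Z + ((sigV s == w) : nat)%:Z - ((sigV v == w) : nat)%:Z) ->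
   exists p, pwalk s (sigV s) p /\
    forall b, (count_mem b p + count_mem (sigP b) p <= h b)%N.
  apply: (gen _ h [::] s (leqnn _) hs) => //=.
  by move=> w; ring.
elim=> [|n IH] r W v Hn Hr HW Hc He;
  (case Hv: (v == sigV s);
   [ move/eqP: Hv => Hv; subst v; exists W; split => // b; by rewrite -(Hc b) leq_addr
   | have [b [Hb Hrb]] := step_exists h0 hpos (He v) (negbT Hv) ]).
  by move: Hn; rewrite (bigD1 b) //=; lia.
set r' := fun c => if (c == b) || (c == sigP b) then (r c).-1 else r c.
have Hbs : (b == sigP b) = false by apply/negbTE; rewrite eq_sym sigP_neq.
have Hsb : (sigP b == b) = false by apply/negbTE; rewrite sigP_neq.
have Hdec : forall c, r c = (r' c + (c == b) + (c == sigP b))%N.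
  move=> c; rewrite /r'; case: (eqVneq c b) => [->|Hcb] /=.
    by rewrite Hbs; lia.
  case: (eqVneq c (sigP b)) => [->|Hcs] /=; last by lia.
  by rewrite Hr; lia.
apply: (IH r' (rcons W b) (headp b)).
- move: Hn; rewrite (bigD1 b) // [in X in _ -> X](bigD1 b) //=.
  have : (\sum_(i | i != b) r' i <= \sum_(i | i != b) r i)%N.
    by apply: leq_sum => c _; rewrite (Hdec c) -addnA leq_addr.
  rewrite /r' eqxx /=; lia.
- move=> c; rewrite /r' Hr.
  have -> : (sigP c == b) = (c == sigP b).
    by apply/eqP/eqP => [<-|->]; rewrite sigP_invol.
  have -> : (sigP c == sigP b) = (c == b).
    by apply/eqP/eqP => [H|->] //; rewrite -(sigP_invol c) H sigP_invol.
  by rewrite orbC.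
- exact: (pwalk_rcons HW Hb).
- move=> c; rewrite !count_rcons1 -(Hc c) (Hdec c).
  have -> : (b == sigP c) = (c == sigP b).
    by apply/eqP/eqP => ->; rewrite sigP_invol.
  rewrite (eq_sym b c); lia.
- move=> w; have := He w.
  rewrite (excP_ext (k2 := fun c => ((r' c)%:Z + ((c == b) : nat)%:Z) + ((c == sigP b) : nat)%:Z)); last first.
    by move=> c; rewrite (Hdec c) !PoszD.
  rewrite !excP_add !excP_delta tailp_sig headp_sig (eqP Hb).
  rewrite [(v == w)]eq_sym.
  set A := excP _ w; lia.
Qed.

Lemma outflowE (G : skewGraph) (f : sg_E G -> nat) v :
  outflow f v = outZ (fun a => (f a)%:Z) v.
Proof. by []. Qed.

Lemma cnt_pos (T : eqType) (x : T) (p : seq T) : x \in p -> (0 < count_mem x p)%N.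
Proof. by move=> H; rewrite -has_count has_pred1. Qed.

Lemma hard_dir (G : skewGraph) (u : sg_E G -> nat) (s : sg_V G)
    (f : sg_E G -> nat) (hf : is_ISflow u s f) g (Hg : is_ISflow u s g)
    (Hlt : flow_value s f < flow_value s g) :
  exists p, r_augmenting u s f p.
Proof.
case: hf => [[fu fc] fs]; case: Hg => [[gu gc] gs].
set h := fun b : Eplus G => match b with inl a => (g a - f a)%N | inr a => (f a - g a)%N end.
have hs : forall b, h (sigP b) = h b by case=> a /=; rewrite fs gs.
have hexc : forall v, excP (fun b => (h b)%:Z) v = outflow g v - outflow f v.
  move=> v; rewrite excP_split !outflowE outZ_sub /outZ.
  by congr (_ - _); apply: eq_bigr => a _ /=; lia.
have h0 : forall v, v != s -> v != sigV s -> excP (fun b => (h b)%:Z) v = 0.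
  by move=> v H1 H2; rewrite hexc fc // gc // subrr.
have hpos : 0 < excP (fun b => (h b)%:Z) s.
  by rewrite hexc; move: Hlt; rewrite /flow_value; lia.
have [p [Hp Hcnt]] := greedy hs h0 hpos.
have [q [Hq Hsub]] := shorten Hp.
have hle : forall b, (h b <= resid u f b)%N.
  case=> a /=; [exact: leq_sub2r | exact: leq_subr].
exists q; rewrite /r_augmenting Hq andTb /regular; apply/andP; split; apply/allP => b /Hsub Hb.
  have := Hcnt b; have := cnt_pos Hb; have := hle b; lia.
apply/implyP => /Hsub Hsb.
have := Hcnt b; have := cnt_pos Hb; have := cnt_pos Hsb; have := hle b; lia.
Qed.

Lemma easy_dir (G : skewGraph) (u : sg_E G -> nat) (s : sg_V G)
    (hu : sym_fun u) (f : sg_E G -> nat) (hf : is_ISflow u s f) p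
    (Hp : r_augmenting u s f p) :
  exists g, is_ISflow u s g /\ flow_value s g = flow_value s f + 2.
Proof.
case: hf => [[fu fc] fs].
move/andP: Hp => [/andP[Hw Hu] /andP[/allP Hpos /allP Hreg]].
have Hup : uniq p.
  by move: Hu; rewrite cons_uniq => /andP[_ /map_uniq].
set c := fun b => count_mem b p.
have cE : forall b, c b = (b \in p) by move=> b; rewrite /c count_uniq_mem.
set g := fun a => (f a + c (inl a) + c (inl (sigE a)) - c (inr a) - c (inr (sigE a)))%N.
have key : forall a, (g a <= u a)%N /\
    (g a)%:Z = (f a)%:Z + (c (inl a))%:Z + (c (inl (sigE a)))%:Z
               - (c (inr a))%:Z - (c (inr (sigE a)))%:Z.
  move=> a; rewrite /g !cE.
  have P1 := Hpos (inl a); have P2 := Hpos (inl (sigE a)).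
  have P3 := Hpos (inr a); have P4 := Hpos (inr (sigE a)).
  have Q1 := Hreg (inl a); have Q3 := Hreg (inr a).
  move: P1 P2 P3 P4 Q1 Q3 => /=; rewrite hu fs.
  case: (inl a \in p); case: (inl (sigE a) \in p);
  case: (inr a \in p); case: (inr (sigE a) \in p) => /=;
  have := fu a; lia.
have Hout : forall v, outflow g v = outflow f v
     + 2 * (((s == v) : nat)%:Z - ((sigV s == v) : nat)%:Z).
  move=> v.
  have -> : outflow g v = outflow f v + (outflow g v - outflow f v) by ring.
  congr (_ + _); rewrite !outflowE outZ_sub.
  have -> : outZ (fun a => (g a)%:Z - (f a)%:Z) v = excP (fun b => (c b)%:Z + (c (sigP b))%:Z) v.
    rewrite excP_split /outZ; congr (_ - _); apply: eq_bigr => a _ /=; rewrite (key a).2; ring.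
  rewrite excP_add (excP_sig (fun b => (c b)%:Z)) !(excP_walk _ Hw).
  have -> : (s == sigV v) = (sigV s == v) by rewrite sigV_eq.
  have -> : (sigV s == sigV v) = (s == v).
    by apply/eqP/eqP => [H|->] //; rewrite -(sigV_invol s) H sigV_invol.
  ring.
exists g; split; first split; first split.
- by move=> a; case: (key a).
- move=> v H1 H2; rewrite Hout fc //.
  rewrite eq_sym (negbTE H1) eq_sym (negbTE H2); ring.
- move=> a; rewrite /g sigE_invol fs.
  by rewrite -addnA (addnC (c (inl (sigE a)))) addnA subnAC.
- rewrite /flow_value Hout eqxx.
  have -> : (sigV s == s) = false by apply/negbTE/sigV_nofix.
  by [].
Qed.

Theorem mainTheorem4 (G : skewGraph) (u : sg_E G -> nat) (s : sg_V G)
    (hu : sym_fun u) (f : sg_E G -> nat) (hf : is_ISflow u s f) :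
  (forall g, is_ISflow u s g -> (flow_value s g <= flow_value s f)%R) <->
  ~ (exists p, r_augmenting u s f p).
Proof.
split.
  move=> Hmax [p Hp].
  have [g [Hg Hv]] := easy_dir hu hf Hp.
  by have := Hmax g Hg; rewrite Hv; lia.
move=> Hno g Hg.
case: (lerP (flow_value s g) (flow_value s f)) => // Hlt.
by case: Hno; apply: (hard_dir hf Hg Hlt).
Qed.
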